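(* For any finite set $P$ of prime numbers, there is a generalized Euclid sequence with seed $P$ that contains every prime number.
   Context: Given a finite set $\{p_1,\ldots,p_k\}$ of distinct primes, for any $I\subseteq\{1,\ldots,k\}$ put $N_I=\prod_{i\in I}p_i+\prod_{i\in\{1,\ldots,k\}\setminus I}p_i$ (empty products equal $1$); $N_I>1$ is coprime to $p_1\cdots p_k$. A generalized Euclid sequence with seed $\{p_1,\ldots,p_k\}$ is an infinite sequence of primes $p_1,p_2,\ldots$ beginning with the seed primes (in some order) such that for every $j\ge k$, $p_{j+1}$ is a prime factor of $N_I$ for some $I\subseteq\{1,\ldots,j\}$ (formed with $p_1,\ldots,p_j$ in place of $p_1,\ldots,p_k$). Equivalently, $p_{j+1}$ is a prime divisor of $d+n/d$ for some positive divisor $d$ of $n=p_1\cdots p_j$. *)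

(* Defs.v *)
From mathcomp Require Import all_boot.
Set Implicit Arguments. Unset Strict Implicit. Unset Printing Implicit Defensive.

Definition gen_euclid_seq (P : seq nat) (p : nat -> nat) : Prop :=
  (forall i, prime (p i)) /\
  perm_eq [seq p i | i <- iota 0 (size P)] P /\
  (forall j, size P <= j ->
     exists d, 0 < d /\ d %| \prod_(i < j) p i /\
               p j %| d + (\prod_(i < j) p i) %/ d).

(* Main.v *)
Require Import Defs.
From mathcomp Require Import all_boot all_order all_algebra all_field all_fingroup all_solvable.
From mathcomp Require Import zify ring.
From Stdlib Require Import Classical IndefiniteDescription Lia.
Set Implicit Arguments. Unset Strict Implicit. Unset Printing Implicit Defensive.

Definition prodl (s : seq nat) := \prod_(x <- s) x.
Definition stepok (s : seq nat) (r : nat) :=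
  prime r /\ exists d, 0 < d /\ d %| prodl s /\ r %| d + prodl s %/ d.
Inductive reach (s : seq nat) : seq nat -> Prop :=
 | reach0 : reach s s
 | reachS t r : reach s t -> stepok t r -> reach s (rcons t r).
Definition good (q : nat) (s : seq nat) :=
  exists d, 0 < d /\ d %| prodl s /\ q %| d + prodl s %/ d.

Lemma reach_trans s t u : reach s t -> reach t u -> reach s u.
Proof. move=> Hst; elim=> [|u' r _ IH Hr] //; exact: reachS. Qed.

Lemma reach_cat s t : reach s t -> exists e, t = s ++ e.
Proof.
elim=> [|t0 r _ [e ->] _]; first by exists [::]; rewrite cats0.
by exists (rcons e r); rewrite rcons_cat.
Qed.

Lemma reach_all s t : reach s t -> all prime s -> all prime t.
Proof.
elim=> [|t0 r _ IH [Hr _]] // Hs; by rewrite all_rcons Hr IH.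
Qed.

Lemma reach_nth s t : reach s t ->
  forall j, size s <= j < size t -> stepok (take j t) (nth 0 t j).
Proof.
elim=> [|t0 r Hst IH Hr] j /andP[Hj1 Hj2]; first by move: (leq_ltn_trans Hj1 Hj2); rewrite ltnn.
rewrite size_rcons ltnS leq_eqVlt in Hj2.
case/orP: Hj2 => [/eqP ->|Hj].
  by rewrite -cats1 take_size_cat // nth_cat ltnn subnn.
rewrite -cats1 takel_cat ?(ltnW Hj) // nth_cat Hj.
by apply: IH; rewrite Hj1.
Qed.

Lemma prodl_gt0 s : all prime s -> 0 < prodl s.
Proof.
elim: s => [|x s IH] /=; first by rewrite /prodl big_nil.
case/andP=> Hx Hs; rewrite /prodl big_cons muln_gt0 prime_gt0 //; exact: IH.
Qed.

Lemma step_exists s : all prime s -> exists r, stepok s r.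
Proof.
move=> Hs; have Hp : 1 < 1 + prodl s by rewrite -[X in X < _]addn0 ltn_add2l prodl_gt0.
exists (pdiv (1 + prodl s)); split; first exact: pdiv_prime.
exists 1; rewrite dvd1n divn1; split=> //; split=> //; exact: pdiv_dvd.
Qed.


Section ASec.
Import GRing.Theory.
Local Open Scope ring_scope.


Section PowerSums.
Variable F : finFieldType.
Variable J : {set F}.
Hypotheses (J0 : 0 \notin J) (J1 : 1 \in J)
  (JM : forall x y, x \in J -> y \in J -> x * y \in J).

Lemma J_neq0 x : x \in J -> x != 0.
Proof. by apply: contraTneq => ->. Qed.

Lemma J_transl u0 : u0 \in J -> [set u0 * u | u in J] = J.
Proof.
move=> Hu0; apply/eqP; rewrite eqEcard.
have Hinj : injective (fun u => u0 * u) := mulfI (J_neq0 Hu0).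
rewrite card_imset // leqnn andbT.
by apply/subsetP=> x /imsetP[u Hu ->]; apply: JM.
Qed.

Lemma J_sum_transl u0 (f : F -> F) : u0 \in J ->
  \sum_(u in J) f (u0 * u) = \sum_(u in J) f u.
Proof.
move=> Hu0; rewrite -{2}(J_transl Hu0) big_imset //.
by move=> x y _ _; exact: (mulfI (J_neq0 Hu0)).
Qed.

Lemma J_exp u : u \in J -> u ^+ #|J| = 1.
Proof.
move=> Hu.
have E : \prod_(x in J) x = \prod_(x in J) (u * x).
  by rewrite -{1}(J_transl Hu) big_imset // => x y _ _; exact: (mulfI (J_neq0 Hu)).
rewrite prodrMl in E.
have Hp : \prod_(x in J) x != 0 by apply/prodf_neq0 => x; exact: J_neq0.
apply/eqP; rewrite -(subr_eq0) -(mulIr_eq0 _ (mulIf Hp)) mulrBl mul1r -E subrr //.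
Qed.

Lemma J_roots i : (0 < i)%N -> {in J, forall u, u ^+ i = 1} -> (#|J| <= i)%N.
Proof.
move=> Hi H; rewrite cardE; apply: max_unity_roots => //; last exact: enum_uniq.
by apply/allP=> x; rewrite mem_enum unity_rootE => /H ->.
Qed.

Lemma J_sum i : \sum_(u in J) u ^+ i = if (#|J| %| i)%N then #|J|%:R else 0.
Proof.
case: ifP => Hd.
  rewrite -sumr_const; apply: eq_bigr => u Hu.
  by rewrite -(divnK Hd) mulnC exprM J_exp // expr1n.
have [u0 Hu0 Hne] : exists2 u0, u0 \in J & u0 ^+ i != 1.
  apply/exists_inP; rewrite -negb_forall_in; apply/negP => /forall_inP H.
  have Hpos : (0 < i %% #|J|)%N by rewrite lt0n -/(dvdn _ _) Hd.
  have : (#|J| <= i %% #|J|)%N.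
    apply: J_roots Hpos _ => u Hu.
    have := eqP (H u Hu); rewrite {1}(divn_eq i #|J|) exprD mulnC exprM J_exp // expr1n mul1r.
    done.
  rewrite leqNgt ltn_mod => /negP; apply; apply/card_gt0P; by exists 1.
set S := \sum_(u in J) u ^+ i.
have E : S = u0 ^+ i * S.
  rewrite /S mulr_sumr -(J_sum_transl (fun u => u ^+ i) Hu0).
  by apply: eq_bigr => u _; rewrite exprMn.
apply/eqP; move: E => /eqP; rewrite -subr_eq0 -{1}(mul1r S) -mulrBl mulf_eq0 subr_eq0 eq_sym (negbTE Hne) //.
Qed.

Lemma J_binom (N : F) h s : \sum_(u in J) (N + u ^+ 2) ^+ h * u ^+ s =
  \sum_(i < h.+1) (N ^+ (h - i) *+ 'C(h, i)) *
     (if (#|J| %| (2 * i + s))%N then #|J|%:R else 0).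
Proof.
transitivity (\sum_(u in J) \sum_(i < h.+1) (N ^+ (h - i) *+ 'C(h, i)) * u ^+ (2 * i + s)).
  apply: eq_bigr => u _; rewrite exprDn mulr_suml; apply: eq_bigr => i _.
  by rewrite exprD exprM !mulrnAl mulrA.
rewrite exchange_big; apply: eq_bigr => i _; by rewrite -mulr_sumr J_sum.
Qed.
End PowerSums.

Lemma sum_pts (R : nmodType) n (f : nat -> R) (ks : seq nat) : uniq ks ->
  all (fun k => k < n)%N ks -> (forall i, (i < n)%N -> i \notin ks -> f i = 0) ->
  \sum_(i < n) f i = \sum_(k <- ks) f k.
Proof.
move=> Hu Ha Hz.
rewrite -(big_mkord xpredT) (bigID (fun i => i \in ks)) /= [X in _ + X]big1_seq ?addr0; last first.
  by move=> i /andP[Hi]; rewrite mem_index_iota => /andP[_ Hin]; apply: Hz.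
rewrite -big_filter; apply: perm_big; apply: uniq_perm => //.
  by apply: filter_uniq; exact: iota_uniq.
move=> x; rewrite mem_filter mem_index_iota /=.
case Hx: (x \in ks) => //=; by rewrite (allP Ha x Hx).
Qed.


Section Euler.
Variable F : finFieldType.

Lemma card_gt1 : (1 < #|F|)%N.
Proof.
apply/card_gt1P; exists 0, 1; split=> //; rewrite eq_sym; exact: oner_neq0.
Qed.

Lemma fermatF (x : F) : x != 0 -> x ^+ #|F|.-1 = 1.
Proof.
move=> Hx; apply: (mulfI Hx); rewrite mulr1 -exprS prednK ?expf_card //.
exact: ltn_trans card_gt1.
Qed.

Lemma eulerF (x : F) m : #|F|.-1 = (2 * m)%N -> x != 0 -> x ^+ m = 1 -> exists a, a ^+ 2 = x.
Proof.
move=> Hm Hx Hxm.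
have Hn : (0 < #|F|.-1)%N by rewrite -ltnS prednK ?card_gt1 //; exact: ltn_trans card_gt1.
have : has (#|F|.-1).-primitive_root (enum [set~ (0 : F)]).
  apply: has_prim_root => //.
  - apply/allP => y; rewrite mem_enum in_setC1 unity_rootE => Hy; by rewrite fermatF.
  - exact: enum_uniq.
  - by rewrite -cardE cardsC1.
case/hasP => z _ Hz.
have [i Hi] := prim_rootP Hz (fermatF Hx).
have Hm0 : (0 < m)%N by move: Hn; rewrite Hm; case: m {Hm Hxm}.
have : (2 * m %| i * m)%N.
  by rewrite -Hm (prim_order_dvd Hz) exprM -Hi Hxm.
rewrite dvdn_pmul2r // => /dvdnP [k Hk].
exists (z ^+ k); by rewrite -exprM -Hk -Hi.
Qed.

Lemma pm1F (x : F) m : #|F|.-1 = (2 * m)%N -> x != 0 -> x ^+ m = 1 \/ x ^+ m = -1.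
Proof.
move=> Hm Hx; have : (x ^+ m) ^+ 2 == 1 by rewrite -exprM mulnC -Hm fermatF.
by rewrite sqrf_eq1 => /orP[/eqP|/eqP]; [left|right].
Qed.
End Euler.

Lemma prod_closed (R : pzRingType) (P : pred R) : P 1 -> (forall x y, P x -> P y -> P (x * y)) ->
  forall v, (0 < v)%N -> (forall r, prime r -> (r %| v)%N -> P r%:R) -> P v%:R.
Proof.
move=> P1 PM; elim/ltn_ind => v IH Hv0 Hr.
case: (ltngtP v 1) => [|Hv1|->] //.
  by rewrite ltnS leqn0 => /eqP E; rewrite E in Hv0.
have Hp := pdiv_prime Hv1; have Hd := pdiv_dvd v.
rewrite -(divnK Hd) natrM; apply: PM; last exact: Hr.
have Hq : (0 < v %/ pdiv v)%N by rewrite divn_gt0 ?prime_gt0 // dvdn_leq.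
apply: IH Hq _.
  rewrite ltn_Pdiv // prime_gt1 //.
move=> r Hr1 Hrd; apply: Hr Hr1 _; apply: dvdn_trans Hrd _; exact: dvdn_div.
Qed.

Lemma F5check : all (fun n => ((n%:R : 'F_5) != 0) ==>
   all (fun k => ((k%:R : 'F_5) == 0) || (((k%:R : 'F_5) + n%:R / k%:R) ^+ 2 == 1)) (iota 0 5)
   ==> ((n%:R : 'F_5) == -2)) (iota 0 5).
Proof. by vm_compute. Qed.

Lemma F5val (x : 'F_5) : x = (x : nat)%:R /\ (x : nat) \in iota 0 5.
Proof. split; first by rewrite (natr_Zp x). by rewrite mem_iota /= (ltn_ord x). Qed.

Lemma F5enum (N : 'F_5) : N != 0 -> (forall u : 'F_5, u != 0 -> (u + N / u) ^+ 2 = 1) -> N = -2.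
Proof.
move=> HN Hu; have [E Hin] := F5val N.
have H := allP F5check _ Hin; cbv beta in H; rewrite -E HN implyTb in H.
apply/eqP; apply: (implyP H); apply/allP => k Hk.
case: eqP => //= /eqP Hk0; rewrite Hu //.
Qed.

End ASec.

Section CSec.
Import GRing.Theory.

Lemma prodl_rcons t r : prodl (rcons t r) = (prodl t * r)%N.
Proof. by rewrite /prodl -cats1 big_cat big_seq1. Qed.

Lemma prodl_cat s e : prodl (s ++ e) = (prodl s * prodl e)%N.
Proof. by rewrite /prodl big_cat. Qed.

Lemma F5gen q (q5 : q = 5%N) (N : 'F_q) : (N != 0)%R ->
  (forall u : 'F_q, (u != 0)%R -> ((u + N / u) ^+ 2 = 1)%R) -> (N = -2)%R.
Proof. subst q; exact: F5enum. Qed.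

Section Key.
Variable q : nat.
Hypothesis pq : prime q.
Local Notation F := 'F_q.
Local Open Scope ring_scope.

Lemma natF0 n : ((n%:R : F) == 0) = (q %| n)%N.
Proof. by rewrite (dvdn_pcharf (pchar_Fp pq)). Qed.

Variable s0 : seq nat.
Hypothesis Hs0 : all prime s0.
Hypothesis NG : forall t, reach s0 t -> ~ good q t.

Lemma R_all t : reach s0 t -> all prime t.
Proof. move=> H; exact: reach_all H Hs0. Qed.

Lemma R_step t r : reach s0 t -> stepok t r -> ~~ (q %| r)%N.
Proof.
move=> Ht [Hr [d [Hd1 [Hd2 Hd3]]]]; apply/negP => Hqr.
move: Hqr; rewrite dvdn_prime2 // => /eqP E; rewrite -E in Hd3.
by apply: (NG Ht); exists d.
Qed.

Hypothesis Hq0 : ~~ (q %| prodl s0)%N.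

Lemma R_ndvd t : reach s0 t -> ~~ (q %| prodl t)%N.
Proof.
elim=> [|t1 r Ht IH Hr] //; rewrite prodl_rcons Euclid_dvdM // negb_or IH /=.
exact: R_step Hr.
Qed.

Definition N t : F := (prodl t)%:R.
Lemma N_neq0 t : reach s0 t -> N t != 0.
Proof. by move=> Ht; rewrite /N natF0 R_ndvd. Qed.

Definition D t : {set F} := [set x : F | [exists d : 'I_(prodl t).+1,
   (0 < d)%N && (d %| prodl t)%N && (x == (d : nat)%:R)]].

Lemma prodl_pos t : reach s0 t -> (0 < prodl t)%N.
Proof. move=> Ht; exact: prodl_gt0 (R_all Ht). Qed.

Lemma DP t x : reach s0 t ->
  reflect (exists d, (0 < d)%N /\ (d %| prodl t)%N /\ x = d%:R) (x \in D t).
Proof.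
move=> /prodl_pos Hp; rewrite inE; apply: (iffP existsP).
  by move=> [d /andP[/andP[H1 H2] /eqP H3]]; exists d.
move=> [d [H1 [H2 H3]]]; have Hd : (d < (prodl t).+1)%N by rewrite ltnS dvdn_leq.
by exists (Ordinal Hd); rewrite /= H1 H2 H3 eqxx.
Qed.

Lemma dvd_neq0 t d : reach s0 t -> (d %| prodl t)%N -> (d%:R : F) != 0.
Proof.
move=> Ht Hd; rewrite natF0; apply: contra (R_ndvd Ht) => H; exact: dvdn_trans H Hd.
Qed.

Lemma D_neq0 t x : reach s0 t -> x \in D t -> x != 0.
Proof. move=> Ht /(DP _ Ht) [d [_ [Hd ->]]]; exact: dvd_neq0 Hd. Qed.

Lemma D_sub t t' : reach s0 t -> reach t t' -> D t \subset D t'.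
Proof.
move=> Ht Htt'; have Ht' := reach_trans Ht Htt'; have [e He] := reach_cat Htt'.
apply/subsetP => x /(DP _ Ht) [d [H1 [H2 ->]]]; apply/(DP _ Ht'); exists d; split=> //; split=> //.
by rewrite He prodl_cat dvdn_mulr.
Qed.

Lemma value_F t d : reach s0 t -> (0 < d)%N -> (d %| prodl t)%N ->
  ((d + prodl t %/ d)%:R : F) = d%:R + N t / d%:R.
Proof.
move=> Ht Hd1 Hd2; rewrite natrD natr_div // unitfE; exact: dvd_neq0 Hd2.
Qed.

Lemma D_max : exists t0, reach s0 t0 /\ forall t, reach t0 t -> (#|D t| <= #|D t0|)%N.
Proof.
suff H : forall k t, reach s0 t -> (#|F| - #|D t| <= k)%N ->
   exists t0, reach s0 t0 /\ forall t', reach t0 t' -> (#|D t'| <= #|D t0|)%N.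
  by apply: (H #|F| s0 (reach0 _)); rewrite leq_subr.
elim=> [|k IH] t Ht Hk.
  exists t; split=> // t' _; have H1 : (#|D t'| <= #|F|)%N := max_card _; lia.
case: (classic (exists t', reach t t' /\ (#|D t| < #|D t'|)%N)) => [[t' [Ht' Hlt]]|Hno].
  apply: (IH t' (reach_trans Ht Ht')); have H1 : (#|D t'| <= #|F|)%N := max_card _; lia.
exists t; split=> // t' Ht'; rewrite leqNgt; apply/negP => H; apply: Hno; by exists t'.
Qed.

Section Max.
Variable t0 : seq nat.
Hypothesis Ht0 : reach s0 t0.
Hypothesis Hmax : forall t, reach t0 t -> (#|D t| <= #|D t0|)%N.

Lemma R0s t : reach t0 t -> reach s0 t.
Proof. exact: reach_trans Ht0. Qed.

Lemma D_const t : reach t0 t -> D t = D t0.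
Proof.
move=> Ht; apply/eqP; rewrite eq_sym eqEcard D_sub //; exact: Hmax.
Qed.

Definition J : {set F} := [set x : F | (x != 0) && [forall y in D t0, x * y \in D t0]].

Lemma J0 : 0 \notin J.
Proof. by rewrite inE eqxx. Qed.

Lemma J1 : 1 \in J.
Proof. rewrite inE oner_neq0 /=; apply/forall_inP => y Hy; by rewrite mul1r. Qed.

Lemma JM x y : x \in J -> y \in J -> x * y \in J.
Proof.
rewrite !inE => /andP[Hx Hx'] /andP[Hy Hy']; rewrite mulf_neq0 //=.
apply/forall_inP => z Hz; rewrite -mulrA; apply: (forall_inP Hx'); exact: (forall_inP Hy').
Qed.

Lemma D1 : 1 \in D t0.
Proof. apply/(DP _ Ht0); exists 1%N; split=> //; split=> //; exact: dvd1n. Qed.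

Lemma J_D u : u \in J -> u \in D t0.
Proof. rewrite inE => /andP[_ /forall_inP H]; have := H _ D1; by rewrite mulr1. Qed.

Lemma J_step t r : reach t0 t -> stepok t r -> (r%:R : F) \in J.
Proof.
move=> Ht Hr; have Ht' := R0s Ht.
have Hr' : reach t0 (rcons t r) := reachS Ht Hr.
rewrite inE natF0 (R_step Ht' Hr) /=; apply/forall_inP => y.
rewrite -(D_const Ht) => /(DP _ Ht') [d [Hd1 [Hd2 ->]]].
rewrite (D_const Ht) -(D_const Hr'); apply/(DP _ (R0s Hr')); exists (d * r)%N.
case: Hr => Hpr _; rewrite muln_gt0 Hd1 prime_gt0 //= prodl_rcons dvdn_mul //.
by rewrite natrM mulrC.
Qed.

Lemma J_val t d : reach t0 t -> (0 < d)%N -> (d %| prodl t)%N ->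
  ((d + prodl t %/ d)%:R : F) \in J.
Proof.
move=> Ht Hd1 Hd2.
apply: (@prod_closed _ (fun x => x \in J)); [exact: J1 | exact: JM | by rewrite addn_gt0 Hd1 |].
move=> r Hr Hrv; apply: J_step Ht _; split=> //; by exists d.
Qed.

Lemma J_K8 t u : reach t0 t -> u \in J -> u + N t / u \in J.
Proof.
move=> Ht Hu; have := J_D Hu; rewrite -(D_const Ht) => /(DP _ (R0s Ht)) [d [Hd1 [Hd2 ->]]].
rewrite -value_F //; [exact: J_val | exact: R0s].
Qed.

Lemma nogood t d : reach t0 t -> (0 < d)%N -> (d %| prodl t)%N ->
  ((d + prodl t %/ d)%:R : F) != 0.
Proof.
move=> Ht Hd1 Hd2; rewrite natF0; apply/negP => H; apply: (NG (R0s Ht)); by exists d.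
Qed.


Local Notation e := #|J|.

Lemma e_gt0 : (0 < e)%N.
Proof. apply/card_gt0P; exists 1; exact: J1. Qed.

Lemma e_le : (e <= q.-1)%N.
Proof.
have H : (e <= #|[set~ (0%R : F)]|)%N.
  apply: subset_leq_card; apply/subsetP => x; by rewrite !inE => /andP[].
by rewrite cardsC1 card_Fp in H.
Qed.

Lemma q_gt1 : (1 < q)%N. Proof. exact: prime_gt1. Qed.

Lemma nat_neq0 n : (0 < n)%N -> (n < q)%N -> (n%:R : F) != 0.
Proof. move=> H1 H2; rewrite natF0; apply/negP => /(dvdn_leq H1); rewrite leqNgt H2. done. Qed.

Lemma e_F : (e%:R : F) != 0.
Proof. apply: nat_neq0 e_gt0 _; have := e_le; have := q_gt1; lia. Qed.

Lemma fact_ndvd n : (n < q)%N -> ~~ (q %| n`!)%N.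
Proof.
elim: n => [|n IH] Hn; first by rewrite fact0 dvdn1; apply/eqP => E; move: q_gt1; rewrite E.
rewrite factS Euclid_dvdM // negb_or IH ?(ltnW Hn) // andbT.
by apply/negP => /(dvdn_leq (ltn0Sn _)); rewrite leqNgt Hn.
Qed.

Lemma binF n k : (n < q)%N -> (k <= n)%N -> ('C(n, k)%:R : F) != 0.
Proof.
move=> Hn Hk; rewrite natF0; apply: contra (fact_ndvd Hn) => H.
by rewrite -(bin_fact Hk) dvdn_mulr.
Qed.

Lemma N0 : N t0 != 0. Proof. exact: N_neq0 Ht0. Qed.

Lemma J_pow u : u \in J -> (N t0 + u ^+ 2) ^+ e = 1.
Proof.
move=> Hu; have Hu0 := J_neq0 J0 Hu.
have -> : N t0 + u ^+ 2 = u * (u + N t0 / u).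
  by rewrite mulrDr mulrCA divff // mulr1 addrC expr2.
have Hw : u + N t0 / u \in J := J_K8 (reach0 _) Hu.
by rewrite exprMn (J_exp J0 JM Hu) (J_exp J0 JM Hw) mulr1.
Qed.


Definition term h s (i : nat) : F :=
  (N t0 ^+ (h - i) *+ 'C(h, i)) * (if (e %| 2 * i + s)%N then e%:R else 0).

Lemma eqn_main h c s : {in J, forall u, (N t0 + u ^+ 2) ^+ h = u ^+ c} ->
  (if (e %| c + s)%N then e%:R else 0) = \sum_(i < h.+1) term h s i.
Proof.
move=> H; rewrite -(J_binom J0 J1 JM) -(J_sum J0 J1 JM); apply: eq_bigr => u Hu.
by rewrite H // exprD.
Qed.

Lemma case_odd : odd e -> False.
Proof.
move=> He.
have H := @eqn_main e 0 0 (fun u Hu => J_pow Hu).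
rewrite dvdn0 (sum_pts (ks := [:: 0%N; e])) in H; last first.
- move=> i Hi; rewrite !inE negb_or => /andP[Hi0 Hie].
  suff H0 : (e %| 2 * i + 0)%N = false by rewrite /term H0 mulr0.
  apply/negP; rewrite addn0 Gauss_dvdr ?coprimen2 // => /(dvdn_leq _).
  rewrite lt0n Hi0 => /(_ isT) Hle.
  by move: Hi Hie Hle; rewrite ltnS => Hi Hie Hle; move: Hie; rewrite eqn_leq Hi Hle.
- by rewrite /= ltnSn.
- by rewrite /= inE eq_sym -lt0n e_gt0.
move: H; rewrite !big_cons big_nil /term subn0 subnn bin0 binn expr0 !mulr1n.
rewrite muln0 add0n dvdn0 addn0 dvdn_mull // mul1r addr0 => H.
have : N t0 ^+ e * e%:R = 0 by apply: (addIr e%:R); rewrite -H add0r.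
by apply/eqP; rewrite mulf_eq0 expf_eq0 (negbTE N0) andbF (negbTE e_F).
Qed.


Lemma flip (c : F) : (forall t, reach t0 t -> N t = c) ->
  (forall t r, reach t0 t -> stepok t r -> (r%:R : F) = 1 \/ (r%:R : F) = -1) ->
  (2%:R : F) != 0 -> False.
Proof.
move=> Hc Hr H2.
have Hc0 : c != 0 by rewrite -(Hc _ (reach0 _)) N0.
have Hv1 : (((1 + prodl t0)%N)%:R : F) != 1.
  by rewrite natrD -/(N t0) (Hc _ (reach0 _)) -subr_eq0 addrAC subrr add0r.
have [r [Hr1 [Hr2 Hr3]]] : exists r, prime r /\ (r %| 1 + prodl t0)%N /\ (r%:R : F) != 1.
  apply: NNPP => Hno; apply: (negP Hv1).
  apply: (@prod_closed _ (fun x : F => x == 1)) => //.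
  - by move=> x y /eqP -> /eqP ->; rewrite mulr1.
  - move=> r Hr1 Hr2; apply/negPn/negP => H; apply: Hno; by exists r.
have Hst : stepok t0 r by split=> //; exists 1%N; rewrite dvd1n divn1.
case: (Hr t0 r (reach0 _) Hst) => [E|Hm]; first by rewrite E eqxx in Hr3.
have Ht' := reachS (reach0 t0) Hst.
have := Hc _ Ht'; rewrite /N prodl_rcons natrM -/(N t0) (Hc _ (reach0 _)) Hm mulrN1 => Hcc.
have : c *+ 2 = 0 by rewrite mulr2n -{1}Hcc addNr.
by apply/eqP; rewrite -mulr_natl mulf_eq0 negb_or H2.
Qed.


Lemma J_pm1 x : e = 2%N -> x \in J -> x = 1 \/ x = -1.
Proof.
move=> He2 Hx; have := J_exp J0 JM Hx; rewrite He2 => /eqP; rewrite sqrf_eq1.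
by case/orP => /eqP; [left|right].
Qed.

Lemma case_2 : e = 2%N -> False.
Proof.
move=> He2.
have Hq2 : (2%:R : F) != 0 by apply: nat_neq0 => //; have := e_le; rewrite He2; lia.
apply: (@flip (-2%:R)) => //.
  move=> t Ht; have := J_pm1 He2 (J_K8 Ht J1); rewrite divr1; case => H.
    have : N t = 0 by apply: (addrI 1); rewrite H addr0.
    by move/eqP; rewrite (negbTE (N_neq0 (R0s Ht))).
  have -> : N t = (1 + N t) - 1 by ring.
  rewrite H; ring.
move=> t r Ht Hr; exact: J_pm1 He2 (J_step Ht Hr).
Qed.


Lemma term_true h s i : (e %| 2 * i + s)%N -> term h s i = N t0 ^+ (h - i) *+ 'C(h, i) * e%:R.
Proof. by rewrite /term => ->. Qed.

Lemma term_false h s i : ~~ (e %| 2 * i + s)%N -> term h s i = 0.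
Proof. by rewrite /term => /negbTE ->; rewrite mulr0. Qed.

Lemma case_even : ~~ odd e -> (4 <= e)%N -> (e < q.-1)%N -> False.
Proof.
move=> Hev He4 Heq.
have [g Hg] : exists g, e = (2 * g.+2)%N.
  exists (e./2.-2); move: (odd_double_half e) He4; rewrite (negbTE Hev) add0n -mul2n.
  move=> E; rewrite -{1}E => H; lia.
set f := g.+2.
have Hf : (0 < f)%N by [].
have H0 := @eqn_main e 0 0 (fun u Hu => J_pow Hu).
rewrite dvdn0 (sum_pts (ks := [:: 0%N; f; e])) in H0; last first.
- move=> i Hi; rewrite !inE !negb_or => /andP[Hi0 /andP[Hif Hie]].
  apply: term_false; rewrite addn0 Hg dvdn_pmul2l //; apply/negP => /dvdnP [k Hk].
  move: Hi Hi0 Hif Hie; rewrite Hg Hk ltnS /f.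
  case: k Hk => [|[|[|k]]] Hk; rewrite ?mul0n ?mul1n ?eqxx //; try lia.
- rewrite /= Hg /f; repeat (apply/andP; split); by [|lia].
- rewrite /= ?inE ?Hg /f; repeat (apply/andP; split); by [|apply/negP => /eqP; lia].
have H1 := @eqn_main e 0 (e - 2) (fun u Hu => J_pow Hu).
have Hnd : ~~ (e %| 0 + (e - 2))%N.
  rewrite add0n; apply/negP => /(dvdn_leq _); rewrite Hg; lia.
rewrite (negbTE Hnd) (sum_pts (ks := [:: 1%N; f.+1])) in H1; last first.
- move=> i Hi; rewrite !inE !negb_or => /andP[Hi1 Hif].
  apply: term_false; apply/negP => /dvdnP [k Hk].
  move: Hi Hi1 Hif Hk; rewrite Hg /f ltnS.
  case: k => [|[|[|k]]]; rewrite ?mul0n ?mul1n; lia.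
- rewrite /= Hg /f; repeat (apply/andP; split); by [|lia].
- rewrite /= ?inE ?Hg /f; repeat (apply/andP; split); by [|apply/negP => /eqP; lia].
move: H0 H1; rewrite !big_cons !big_nil !addr0.
rewrite (term_true _ (i := 0)) ?dvdn0 // (term_true _ (i := f)); last by rewrite addn0 Hg.
rewrite (term_true _ (i := e)); last by rewrite addn0 dvdn_mull.
rewrite (term_true _ (i := 1)); last by rewrite Hg /f; apply/dvdnP; exists 1%N; lia.
rewrite (term_true _ (i := f.+1)); last by rewrite Hg /f; apply/dvdnP; exists 2%N; lia.
set x := N t0 ^+ f.
have E1 : N t0 ^+ (e - 0) = x ^+ 2 by rewrite subn0 -exprM Hg mulnC.
have E2 : N t0 ^+ (e - f) = x by rewrite Hg /x /f; congr (_ ^+ _); lia.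
have E3 : N t0 ^+ (e - 1) = N t0 ^+ g.+1 * x by rewrite -exprD Hg /f; congr (_ ^+ _); lia.
have E4 : N t0 ^+ (e - f.+1) = N t0 ^+ g.+1 by rewrite Hg /f; congr (_ ^+ _); lia.
rewrite E1 E2 E3 E4 subnn expr0 bin0 binn bin1 !mulr1n.
set C := 'C(e, f); set A := 'C(e, f.+1).
move=> H0 H1.
have Hx0 : x != 0 by rewrite expf_neq0 // N0.
have Hxe : x = - C%:R.
  have : x * (x + C%:R) * e%:R = 0.
    apply: (addIr e%:R); rewrite add0r {3}H0; ring.
  move/eqP; rewrite (mulf_eq0 (x * _)) (mulf_eq0 x) (negbTE Hx0) (negbTE e_F) orbF /= addr_eq0 => /eqP //.
have HA : A%:R = (2 * f)%:R * (C%:R : F).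
  have : N t0 ^+ g.+1 * ((2 * f)%:R * x + A%:R) * e%:R = 0.
    rewrite /f Hg in H1 *; rewrite H1; ring.
  move/eqP; rewrite !mulf_eq0 (negbTE e_F) orbF expf_eq0 (negbTE N0) andbF /= addrC addr_eq0.
  by move/eqP => ->; rewrite Hxe mulrN opprK.
have Hnat : (f.+1 * A = f * C)%N.
  rewrite /A /C mul_bin_left Hg; congr (_ * _)%N; rewrite /f; lia.
have : (f%:R : F) * C%:R * (2 * f + 1)%:R = 0.
  have : ((f.+1 * A)%:R : F) = (f * C)%:R by rewrite Hnat.
  rewrite !natrM HA !natrM => H.
  rewrite natrD natrM; apply: (addIr ((f * C)%:R)); rewrite add0r natrM -[in RHS]H -[f.+1]addn1 natrD; ring.
have Hf0 : (f%:R : F) != 0 by apply: nat_neq0 => //; have := e_le; rewrite Hg /f; lia.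
have HC0 : (C%:R : F) != 0 by apply: binF; have := e_le; rewrite Hg /f; lia.
have H20 : ((2 * f + 1)%N%:R : F) != 0 by apply: nat_neq0 => //; move: Heq; rewrite Hg /f; lia.
by apply/eqP; rewrite (mulf_eq0 (_ * _)) mulf_eq0 (negbTE Hf0) (negbTE HC0) (negbTE H20).
Qed.


Section Full.
Variable m : nat.
Hypothesis Hfull : e = q.-1.
Hypothesis Hm : e = (2 * m)%N.
Hypothesis Hm2 : (2 <= m)%N.

Lemma Hcard : #|F|.-1 = (2 * m)%N.
Proof. by rewrite card_Fp // -Hm Hfull. Qed.

Lemma J_full u : u != 0 -> u \in J.
Proof.
move=> Hu.
have E : J = [set~ 0].
  apply/eqP; rewrite eqEcard cardsC1 card_Fp // -Hfull leqnn andbT.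
  by apply/subsetP => x Hx; rewrite !inE (J_neq0 J0 Hx).
by rewrite E !inE.
Qed.

Lemma DtJ t (u : F) : reach t0 t -> u != 0 -> exists d, (0 < d)%N /\ (d %| prodl t)%N /\ u = d%:R.
Proof.
move=> Ht Hu; have := J_D (J_full Hu); rewrite -(D_const Ht); move/(DP _ (R0s Ht)); done.
Qed.

Lemma negN t : reach t0 t -> (- N t) ^+ m != 1.
Proof.
move=> Ht; apply/negP => /eqP H.
have HN := N_neq0 (R0s Ht).
have HN' : - N t != 0 by rewrite oppr_eq0.
have [a Ha] := eulerF Hcard HN' H.
have Ha0 : a != 0 by apply: contra HN' => /eqP Ea; rewrite -Ha Ea expr0n.
have [d [Hd1 [Hd2 Ed]]] := DtJ Ht Ha0.
apply: (negP (nogood Ht Hd1 Hd2)); rewrite (value_F (R0s Ht) Hd1 Hd2) -Ed.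
have -> : N t = - a ^+ 2 by rewrite Ha opprK.
by rewrite mulNr expr2 mulfK // subrr.
Qed.

Lemma negN1 t : reach t0 t -> (- N t) ^+ m = -1.
Proof.
move=> Ht; have HN' : - N t != 0 by rewrite oppr_eq0 (N_neq0 (R0s Ht)).
by case: (pm1F Hcard HN') => // /eqP; rewrite (negbTE (negN Ht)).
Qed.

Lemma gen_r t r : reach t0 t -> stepok t r -> (r%:R : F) ^+ m = 1.
Proof.
move=> Ht Hr; have Hr0 : (r%:R : F) != 0 := J_neq0 J0 (J_step Ht Hr).
case: (pm1F Hcard Hr0) => // Hm1.
have Ht' := reachS Ht Hr.
have := negN Ht'; rewrite /N prodl_rcons natrM -/(N t) -mulNr exprMn negN1 // Hm1.
by rewrite mulrNN mulr1 eqxx.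
Qed.

Lemma all_u t (u : F) : reach t0 t -> u != 0 -> (u + N t / u) ^+ m = 1.
Proof.
move=> Ht Hu; have [d [Hd1 [Hd2 ->]]] := DtJ Ht Hu.
rewrite -(value_F (R0s Ht) Hd1 Hd2); apply/eqP.
apply: (@prod_closed _ (fun x : F => x ^+ m == 1)); first by rewrite expr1n.
- by move=> x y /eqP Hx /eqP Hy; rewrite exprMn Hx Hy mulr1.
- by rewrite addn_gt0 Hd1.
move=> r Hr Hrv; apply/eqP; apply: gen_r Ht _; split=> //; by exists d.
Qed.


Lemma Hpow_full : {in J, forall u, (N t0 + u ^+ 2) ^+ m = u ^+ m}.
Proof.
move=> u Hu; have Hu0 := J_neq0 J0 Hu.
have -> : N t0 + u ^+ 2 = u * (u + N t0 / u).
  by rewrite mulrDr mulrCA divff // mulr1 addrC expr2.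
by rewrite exprMn (all_u (reach0 _) Hu0) mulr1.
Qed.

Lemma case_big : (3 <= m)%N -> False.
Proof.
move=> Hm3.
have H := @eqn_main m m 2 Hpow_full.
have Hnd : ~~ (e %| m + 2)%N.
  apply/negP => /(dvdn_leq _); rewrite Hm; lia.
rewrite (negbTE Hnd) (sum_pts (ks := [:: m.-1])) in H; last first.
- move=> i Hi; rewrite !inE => Hi1.
  apply: term_false; apply/negP => /dvdnP [k Hk].
  move: Hi Hi1 Hk; rewrite Hm ltnS.
  case: k => [|[|k]]; rewrite ?mul0n ?mul1n; nia.
- by rewrite /= andbT; lia.
- by [].
move: H; rewrite big_cons big_nil addr0 term_true; last first.
  by rewrite Hm; apply/dvdnP; exists 1%N; lia.
have -> : (m - m.-1 = 1)%N by lia.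
case: m Hm Hm2 Hm3 => [|k] Hk Hk2 Hk3 //; rewrite /= binSn expr1 => /esym /eqP.
rewrite mulf_eq0 (negbTE e_F) orbF -mulr_natr mulf_eq0 (negbTE N0) /=.
apply/negP; apply: nat_neq0 => //; have := e_le; rewrite Hk; lia.
Qed.

Lemma case_5 : q = 5%N -> False.
Proof.
move=> Hq5.
have Hm2' : m = 2%N by move: Hfull Hm Hq5; lia.
apply: (@flip (-2%:R)).
- move=> t Ht; apply: (F5gen Hq5 (N_neq0 (R0s Ht))) => u Hu.
  by rewrite -Hm2' all_u.
- move=> t r Ht Hr; have := gen_r Ht Hr; rewrite Hm2' => /eqP; rewrite sqrf_eq1.
  by case/orP => /eqP; [left|right].
- by apply: nat_neq0 => //; rewrite Hq5.
Qed.

End Full.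

Lemma contra_max : False.
Proof.
case: (boolP (odd e)) => Hodd; first exact: case_odd.
case: (eqVneq e 2%N) => He2; first exact: case_2.
have He4 : (4 <= e)%N.
  have H1 : e != 1%N by apply: contraNneq Hodd => ->.
  have H3 : e != 3%N by apply: contraNneq Hodd => ->.
  have := e_gt0; move: H1 H3 He2; lia.
have [m Hm] : exists m, e = (2 * m)%N.
  exists e./2; move: (odd_double_half e); rewrite (negbTE Hodd) add0n -mul2n; done.
have := e_le; rewrite leq_eqVlt => /orP [/eqP Hfull|Hlt]; last exact: case_even.
have Hm2 : (2 <= m)%N by lia.
case: (eqVneq q 5%N) => Hq5; first exact: (case_5 Hfull Hm Hm2).
apply: (case_big Hfull Hm Hm2); move: Hfull Hm Hq5; lia.
Qed.

End Max.

Lemma contra_key : False.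
Proof. have [t0 [Ht0 Hmax]] := D_max; exact: contra_max Ht0 Hmax. Qed.
End Key.

Lemma reach_q q s : prime q -> all prime s -> ~~ (q %| prodl s)%N ->
  exists t, reach s t /\ good q t.
Proof.
move=> Hq Hs Hqs; apply: NNPP => H.
apply: (@contra_key q Hq s Hs _ Hqs) => t Ht Hg; apply: H; by exists t.
Qed.

End CSec.



Lemma notdvd_prodl q s : prime q -> all prime s -> q \notin s -> ~~ (q %| prodl s).
Proof.
move=> Hq; elim: s => [|x s IH] /=; first by rewrite /prodl big_nil dvdn1; case: eqP => // E; move: Hq; rewrite E.
case/andP=> Hx Hs; rewrite in_cons negb_or => /andP[Hqx Hqs].
rewrite /prodl big_cons Euclid_dvdM // negb_or; apply/andP; split; last exact: IH.
by rewrite dvdn_prime2 // eq_sym.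
Qed.

Lemma reach_prime q s : prime q -> all prime s -> exists t, reach s t /\ q \in t.
Proof.
move=> Hq Hs; case Hin: (q \in s); first by exists s; split=> //; exact: reach0.
have [t [Hst [d [Hd1 [Hd2 Hd3]]]]] := reach_q Hq Hs (notdvd_prodl Hq Hs (negbT Hin)).
exists (rcons t q); split; last by rewrite mem_rcons mem_head.
apply: reachS Hst _; split=> //; by exists d.
Qed.

Definition spec (s : seq nat) (k : nat) (t : seq nat) :=
  reach s t /\ (all prime s -> prime k -> k \in t) /\ (all prime s -> size s < size t).

Lemma spec_ex s k : exists t, spec s k t.
Proof.
case: (boolP (all prime s)) => Hs; last first.
  by exists s; split; [exact: reach0 | split=> H; rewrite H in Hs].
have [t1 [H1 H2]] : exists t1, reach s t1 /\ (prime k -> k \in t1).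
  case: (boolP (prime k)) => Hk.
    by have [t [Ht1 Ht2]] := reach_prime Hk Hs; exists t.
  by exists s; split=> //; exact: reach0.
have [r Hr] := step_exists (reach_all H1 Hs).
exists (rcons t1 r); split; first exact: reachS H1 Hr.
split=> _; first by move=> /H2; rewrite mem_rcons in_cons => ->; rewrite orbT.
have [e ->] := reach_cat H1; by rewrite size_rcons size_cat ltnS leq_addr.
Qed.

Definition next s k := proj1_sig (constructive_indefinite_description _ (spec_ex s k)).
Lemma nextP s k : spec s k (next s k).
Proof. exact: (proj2_sig (constructive_indefinite_description _ (spec_ex s k))). Qed.

Section Seq.
Variable P : seq nat.
Hypothesis hP : all prime P.

Fixpoint L k := match k with 0 => P | k'.+1 => next (L k') k' end.

Lemma L_all k : all prime (L k).
Proof. elim: k => //= k IH; case: (nextP (L k) k) => H _; exact: reach_all H IH. Qed.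

Lemma L_reach k k' : k <= k' -> reach (L k) (L k').
Proof.
move=> /subnK <-; elim: (k' - k) => [|n IH]; first exact: reach0.
rewrite addSn /=; apply: reach_trans IH _; by case: (nextP (L (n + k)) (n + k)).
Qed.

Lemma L_size k : k <= size (L k).
Proof.
elim: k => //= k IH; case: (nextP (L k) k) => _ [_ H]; exact: leq_ltn_trans IH (H (L_all k)).
Qed.

Lemma L_prime k : prime k -> k \in L k.+1.
Proof. move=> Hk /=; case: (nextP (L k) k) => _ [H _]; exact: H (L_all k) Hk. Qed.

Definition pseq i := nth 0 (L i.+1) i.

Lemma L_nth k i : i < size (L k) -> nth 0 (L k) i = pseq i.
Proof.
move=> Hi; rewrite /pseq.
have Hi' : i < size (L i.+1) by exact: L_size.
case: (leqP k i.+1) => Hk.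
  have [e He] := reach_cat (L_reach Hk); by rewrite He nth_cat Hi.
have [e He] := reach_cat (L_reach (ltnW Hk)); by rewrite He nth_cat Hi'.
Qed.

Lemma pseq_ok : gen_euclid_seq P pseq.
Proof.
split.
  move=> i; have := L_all i.+1; move/all_nthP; apply; exact: L_size.
split.
  have -> : [seq pseq i | i <- iota 0 (size P)] = [seq nth 0 P i | i <- iota 0 (size P)].
    apply/eq_in_map => i; rewrite mem_iota add0n => /andP[_ Hi].
    by rewrite -(L_nth (k:=0)).
  by rewrite -/(mkseq _ _) mkseq_nth.
move=> j Hj.
have Hst := L_reach (leq0n j.+1).
have Hsz : j < size (L j.+1) by exact: L_size.
have [Hpr [d [Hd1 [Hd2 Hd3]]]] := reach_nth Hst (j:=j) (ltac:(by rewrite Hj Hsz)).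
have E : prodl (take j (L j.+1)) = \prod_(i < j) pseq i.
  rewrite /prodl (big_nth 0) size_take Hsz big_mkord; apply: eq_bigr => i _.
  by rewrite nth_take // L_nth // (ltn_trans (ltn_ord i) Hsz).
exists d; rewrite -E; split=> //; split=> //.
Qed.

Lemma pseq_all q : prime q -> exists i, pseq i = q.
Proof.
move=> Hq; have := L_prime Hq; move/(nthP 0) => [i Hi <-]; exists i; by rewrite L_nth.
Qed.
End Seq.

Theorem theorem1 (P : seq nat) (hP : all prime P) (huniq : uniq P) :
  exists p : nat -> nat, gen_euclid_seq P p /\
    (forall q, prime q -> exists i, p i = q).
Proof.
exists (pseq P); split; [exact: pseq_ok | exact: pseq_all].
Qed.
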